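(* Consider the family of differential operators $T_\lambda=Q_2(z)\frac{d^2}{dz^2}+(Q_1(z)\lambda+P_1(z))\frac{d}{dz}+(\lambda^2+p\lambda+q)Q_0$ depending on $\lambda\in\mathbb C$, and assume it is of generic type. Then there exists a positive integer $N$ such that for every integer $n\ge N$ there are two values $\lambda_{1,n},\lambda_{2,n}$ of $\lambda$ for which $T_\lambda(y)=0$ has a polynomial solution of degree $n$, and $\lim_{n\to\infty}\lambda_{i,n}/n=\alpha_i$ ($i=1,2$), where $\alpha_1,\alpha_2$ are the roots of the characteristic polynomial $q_{22}+q_{11}t+q_{00}t^2$.
   Context: Here $Q_2$ is a polynomial of degree $2$, $Q_1,P_1$ are polynomials of degree at most $1$, $Q_0$ is a nonzero constant, $p,q\in\mathbb C$. Write $Q_i(z)=\sum_{j=0}^iq_{ji}z^j$ ($i=0,1,2$), with $q_{22}\ne0$, $q_{00}=Q_0\ne0$. The characteristic polynomial of $T_\lambda$ is $q_{22}+q_{11}t+q_{00}t^2$; the family is of generic type if its two roots have distinct arguments. *)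

(* Defs.v *)
(* The complex field is modelled by an arbitrary
   archimedean numeric algebraically closed field C (e.g. algC; any such
   field is an algebraically closed subfield of the complex numbers). *)
From HB Require Import structures.
From mathcomp Require Import all_boot all_order all_algebra.
Set Implicit Arguments. Unset Strict Implicit. Unset Printing Implicit Defensive.
Import Order.TTheory GRing.Theory Num.Theory.
Local Open Scope ring_scope.

Definition Top (C : archiClosedFieldType) (Q2 Q1 P1 : {poly C}) (Q0 p q : C)
  (lam : C) (y : {poly C}) : {poly C} :=
  Q2 * y^`(2) + (lam *: Q1 + P1) * y^`() + ((lam ^+ 2 + p * lam + q) * Q0) *: y.

Definition charpoly_T (C : archiClosedFieldType) (Q2 Q1 : {poly C}) (Q0 : C)
  : {poly C} :=
  (Q2`_2)%:P + Q1`_1 *: 'X + Q0 *: 'X^2.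

Definition same_arg (C : archiClosedFieldType) (a b : C) : bool :=
  a / `|a| == b / `|b|.

Definition converges_to (C : archiClosedFieldType) (u : nat -> C) (l : C) : Prop :=
  forall e : C, 0 < e -> exists M : nat, forall n : nat, (M <= n)%N -> `|u n - l| < e.

(* Main.v *)
Require Import Defs.
From HB Require Import structures.
From mathcomp Require Import all_boot all_order all_algebra.
From mathcomp Require Import ring.
Import Order.TTheory GRing.Theory Num.Theory.
Set Implicit Arguments. Unset Strict Implicit. Unset Printing Implicit Defensive.
Local Open Scope ring_scope.

Lemma poly3E (R : comNzRingType) (P : {poly R}) : (size P <= 3)%N ->
  P = (P`_0)%:P + P`_1 *: 'X + P`_2 *: 'X^2.
Proof.
move=> hs; apply/polyP=> i; rewrite !coefD coefC !coefZ coefX coefXn.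
case: i => [|[|[|i]]] /=; rewrite ?mulr0 ?mulr1 ?addr0 ?add0r //.
by move/leq_sizeP: hs => ->.
Qed.

Lemma poly2E (R : comNzRingType) (P : {poly R}) : (size P <= 2)%N ->
  P = (P`_0)%:P + P`_1 *: 'X.
Proof.
move=> hs; apply/polyP=> i; rewrite !coefD coefC !coefZ coefX.
case: i => [|[|i]] /=; rewrite ?mulr0 ?mulr1 ?addr0 ?add0r //.
by move/leq_sizeP: hs => ->.
Qed.

Definition dd (C : archiClosedFieldType) (Q2 Q1 P1 : {poly C}) (Q0 p q lam : C) (j : nat) : C :=
  Q2`_2 * (j * j.-1)%:R + (lam * Q1`_1 + P1`_1) * j%:R + (lam ^+ 2 + p * lam + q) * Q0.

Lemma coef_Top (C : archiClosedFieldType) (Q2 Q1 P1 : {poly C}) (Q0 p q lam : C) (y : {poly C}) j :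
  (size Q2 <= 3)%N -> (size Q1 <= 2)%N -> (size P1 <= 2)%N ->
  (Top Q2 Q1 P1 Q0 p q lam y)`_j = dd Q2 Q1 P1 Q0 p q lam j * y`_j
    + (Q2`_1 * (j.+1 * j)%:R + (lam * Q1`_0 + P1`_0) * j.+1%:R) * y`_j.+1
    + Q2`_0 * (j.+2 * j.+1)%:R * y`_j.+2.
Proof.
move=> h2 h1 h0; rewrite /Top {1}(poly3E h2) {1}(poly2E h1) {1}(poly2E h0) /dd.
rewrite !(scalerDr, mulrDl, scalerA) -!scalerAl !coefD !coefZ !coefCM !coefXM coefXnM.
rewrite !derivnS derivn0 !coef_deriv.
case: j => [|[|j]] /=; rewrite ?subSS ?subn0; ring.
Qed.

Section PolyPart.
Variables (C : archiClosedFieldType) (Q2 Q1 P1 : {poly C}) (Q0 p q lam : C).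
Hypotheses (h2 : (size Q2 <= 3)%N) (h1 : (size Q1 <= 2)%N) (h0 : (size P1 <= 2)%N).
Local Notation T := (Top Q2 Q1 P1 Q0 p q lam).
Local Notation d := (dd Q2 Q1 P1 Q0 p q lam).

Lemma Top_size (y : {poly C}) m : (size y <= m)%N -> (size (T y) <= m)%N.
Proof.
move/leq_sizeP=> hy; apply/leq_sizeP=> j hj.
rewrite coef_Top // (hy j) // (hy j.+1) ?(hy j.+2) ?mulr0 ?addr0 //.
  by rewrite (leq_trans hj) // leqW // leqnn.
by rewrite (leq_trans hj) // leqW.
Qed.

Lemma Top_top (y : {poly C}) m : (size y <= m.+1)%N -> (T y)`_m = d m * y`_m.
Proof.
move/leq_sizeP=> hy; rewrite coef_Top // (hy m.+1) // (hy m.+2) ?mulr0 ?addr0 //.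
Qed.

Lemma Top_add (u v : {poly C}) : T (u + v) = T u + T v.
Proof. by apply/polyP=> j; rewrite coefD !coef_Top // !coefD; ring. Qed.

Lemma Top_scale (c : C) (u : {poly C}) : T (c *: u) = c *: T u.
Proof. by apply/polyP=> j; rewrite coefZ !coef_Top // !coefZ; ring. Qed.

Lemma Top_opp (u : {poly C}) : T (- u) = - T u.
Proof. by rewrite -scaleN1r Top_scale scaleN1r. Qed.

Lemma Top_sub (u v : {poly C}) : T (u - v) = T u - T v.
Proof. by rewrite Top_add Top_opp. Qed.

Lemma Top_solve k : (forall j, (j < k)%N -> d j != 0) ->
  forall g : {poly C}, (size g <= k)%N -> exists u : {poly C}, (size u <= k)%N /\ T u = g.
Proof.
elim: k => [|k IH] hd g hg.
  exists 0; split; first by rewrite size_poly0.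
  move: hg; rewrite leqn0 size_poly_eq0 => /eqP ->.
  by move: (Top_scale 0 0); rewrite !scale0r.
set c := g`_k / d k.
have hck : (size (c *: 'X^k) <= k.+1)%N.
  by rewrite (leq_trans (size_scale_leq _ _)) // size_polyXn.
pose r : {poly C} := g - T (c *: 'X^k).
have hr : (size r <= k)%N.
  have hs : (size r <= k.+1)%N.
    by rewrite (leq_trans (size_polyD _ _)) // geq_max hg size_polyN Top_size.
  apply/leq_sizeP=> j hj; have [hlt|hjk|heq] := ltngtP j k.
  - by move: hlt; rewrite ltnNge hj.
  - by move/leq_sizeP: hs; apply.
  rewrite heq /r coefB Top_top // coefZ coefXn eqxx mulr1 /c mulrC divfK ?subrr //.
  exact: hd.
have [u [hu1 hu2]] := IH (fun j hj => hd j (ltnW hj)) _ hr.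
exists (u + c *: 'X^k); split.
  by rewrite (leq_trans (size_polyD _ _)) // geq_max (leq_trans hu1) // hck.
by rewrite Top_add hu2 /r subrK.
Qed.

Lemma Top_exists n : d n = 0 -> (forall j, (j < n)%N -> d j != 0) ->
  exists y : {poly C}, size y = n.+1 /\ T y = 0.
Proof.
move=> hn hd.
have hg : (size (T 'X^n) <= n)%N.
  have hs : (size (T 'X^n) <= n.+1)%N by rewrite Top_size // size_polyXn.
  apply/leq_sizeP=> j hj; have [hlt|hjk|heq] := ltngtP j n.
  - by move: hlt; rewrite ltnNge hj.
  - by move/leq_sizeP: hs; apply.
  by rewrite heq Top_top ?size_polyXn // hn mul0r.
have [u [hu1 hu2]] := Top_solve hd hg.
exists ('X^n - u); split; last by rewrite Top_sub hu2 subrr.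
rewrite size_polyDl. apply: size_polyXn. by rewrite size_polyN (size_polyXn C) ltnS.
Qed.

Lemma Top_nec n (y : {poly C}) : size y = n.+1 -> T y = 0 -> d n = 0.
Proof.
move=> hy hT; have := Top_top (m := n) (y := y); rewrite hy leqnn hT coef0 => /(_ isT) /esym /eqP.
rewrite mulf_eq0 => /orP [/eqP //|].
have : lead_coef y != 0 by rewrite lead_coef_eq0 -size_poly_eq0 hy.
by rewrite lead_coefE hy /= => /negPf ->.
Qed.

End PolyPart.

Definition FF (C : archiClosedFieldType) (a b p c q x lam : C) : C :=
  (lam - a * x) * (lam - b * x) + p * lam + c * x + q.

Lemma FF_sym (C : archiClosedFieldType) (a b p c q x lam : C) :
  FF a b p c q x lam = FF b a p c q x lam.
Proof. by rewrite /FF mulrC. Qed.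

Lemma cone (C : archiClosedFieldType) (a b x y : C) : a != 0 -> b != 0 ->
  0 <= x -> 0 <= y ->
  `|a| * x * `|a / `|a| - b / `|b| | <= 2 * `|a * x - b * y|.
Proof.
move=> ha hb hx hy.
have hna : `|a| != 0 by rewrite normr_eq0.
have hnb : `|b| != 0 by rewrite normr_eq0.
have e1 : `|a| * x * (a / `|a| - b / `|b|) = (a * x - b * y) + (`|b| * y - `|a| * x) * (b / `|b|).
  by field; apply/andP.
have e2 : `|a| * x * `|a / `|a| - b / `|b| | = `| `|a| * x * (a / `|a| - b / `|b|)|.
  by rewrite normrM (ger0_norm (mulr_ge0 (normr_ge0 a) hx)).
rewrite e2 e1 (le_trans (ler_normD _ _)) // normrM normf_div normr_id divff // mulr1 mulr2n mulrDl mul1r lerD2l.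
rewrite -normrN opprB.
have := ler_dist_dist (a * x) (b * y).
by rewrite !normrM (ger0_norm hx) (ger0_norm hy).
Qed.

Lemma avoid (C : archiClosedFieldType) (al be p c q N J lam E : C) :
  al != 0 -> be != 0 -> 0 <= J -> 0 <= N -> N != J ->
  FF al be p c q N lam = 0 -> `|lam - al * N| <= E ->
  2 * (`|al + be| * E + `|c|) < `|al| ^+ 2 * N * `|al / `|al| - be / `|be| | ->
  FF al be p c q J lam != 0.
Proof.
move=> ha hb hJ hN hNJ hF hE hlt.
have id : FF al be p c q J lam =
   (N - J) * (al * (al * N - be * J) + (al + be) * (lam - al * N) - c) + FF al be p c q N lam.
  by rewrite /FF; ring.
rewrite id hF addr0 mulf_neq0 ?subr_eq0 //; apply/negP=> /eqP h.
have hXY : al * (al * N - be * J) = - ((al + be) * (lam - al * N) - c).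
  by apply/eqP; rewrite -subr_eq0; apply/eqP; rewrite -h; ring.
have hY : `|(al + be) * (lam - al * N) - c| <= `|al + be| * E + `|c|.
  by rewrite (le_trans (ler_normB _ _)) // lerD2r normrM ler_wpM2l.
have hX : `|al| ^+ 2 * N * `|al / `|al| - be / `|be| | <= 2 * `|al * (al * N - be * J)|.
  rewrite normrM mulrCA expr2 -!mulrA ler_wpM2l // mulrA.
  exact: cone.
have := lt_le_trans hlt hX; rewrite hXY normrN.
move=> H; have := lt_le_trans H (ler_wpM2l (ler0n _ 2) hY).
by rewrite ltxx.
Qed.

Section Core.
Variables (C : archiClosedFieldType) (a1 a2 p c q : C).
Hypotheses (ha1 : a1 != 0) (ha2 : a2 != 0) (hsa : ~~ same_arg a1 a2).

Definition dl := a1 - a2.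
Definition sg := a1 + a2.
Definition Dn (N : C) := (sg * N - p) ^+ 2 - 4 * (a1 * a2 * N ^+ 2 + c * N + q).
Definition vv (N : C) := let w := sqrtC (Dn N) in
  if `|w - dl * N| <= `|w + dl * N| then w else - w.
Definition l1 (N : C) := (sg * N - p + vv N) / 2.
Definition l2 (N : C) := (sg * N - p - vv N) / 2.
Definition AA := - (2 * sg * p + 4 * c).
Definition BB := p ^+ 2 - 4 * q.
Definition MM := (`|AA| + `|BB|) / `|dl|.
Definition EE := (MM + `|p|) / 2.

Lemma two_neq0 : (2 : C) != 0.
Proof. by rewrite pnatr_eq0. Qed.

Lemma dl_neq0 : dl != 0.
Proof.
apply: contraNneq hsa; rewrite /dl => /eqP; rewrite subr_eq0 => /eqP ->.
by rewrite /same_arg.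
Qed.

Lemma vv2 N : vv N ^+ 2 = Dn N.
Proof. by rewrite /vv; case: ifP; rewrite ?sqrrN sqrtCK. Qed.

Lemma vvle N : `|vv N - dl * N| <= `|vv N + dl * N|.
Proof.
rewrite /vv; set w := sqrtC (Dn N); case: ifP => // /negbT.
rewrite -real_ltNge ?normr_real // => /ltW.
have -> : - w - dl * N = - (w + dl * N) by ring.
have -> : - w + dl * N = - (w - dl * N) by ring.
by rewrite !normrN.
Qed.

Lemma FF_fact N lam : FF a1 a2 p c q N lam = (lam - l1 N) * (lam - l2 N).
Proof.
apply/eqP; rewrite -subr_eq0; apply/eqP.
have -> : FF a1 a2 p c q N lam - (lam - l1 N) * (lam - l2 N) = (vv N ^+ 2 - Dn N) / 4.
  rewrite /FF /l1 /l2 /Dn /sg; by field.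
by rewrite vv2 subrr mul0r.
Qed.

Lemma vid N : (vv N - dl * N) * (vv N + dl * N) = AA * N + BB.
Proof.
have -> : (vv N - dl * N) * (vv N + dl * N) = vv N ^+ 2 - (dl * N) ^+ 2 by ring.
by rewrite vv2 /Dn /AA /BB /dl /sg; ring.
Qed.

Lemma vbound N : 1 <= N -> `|vv N - dl * N| <= MM.
Proof.
move=> hN1; have hN : 0 < N by rewrite (lt_le_trans ltr01).
have hd : 0 < `|dl| by rewrite normr_gt0 dl_neq0.
have h1 : `|dl * N| <= `|vv N + dl * N|.
  have e : 2 * `|dl * N| = `|(vv N + dl * N) - (vv N - dl * N)|.
    have -> : (vv N + dl * N) - (vv N - dl * N) = 2 * (dl * N) by ring.
    by rewrite [RHS]normrM normr_nat.
  have : 2 * `|dl * N| <= 2 * `|vv N + dl * N|.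
    rewrite e (le_trans (ler_normB _ _)) // mulr_natl mulr2n lerD2l.
    exact: vvle.
  by rewrite ler_pM2l // ltr0n.
have h3 : `|AA * N + BB| <= (`|AA| + `|BB|) * N.
  rewrite (le_trans (ler_normD _ _)) // mulrDl normrM (gtr0_norm hN) lerD2l.
  by rewrite ler_peMr.
have h4 : `|vv N - dl * N| * (`|dl| * N) <= (`|AA| + `|BB|) * N.
  have e : `|vv N - dl * N| * `|vv N + dl * N| = `|AA * N + BB| by rewrite -normrM vid.
  have e2 : `|dl| * N = `|dl * N| by rewrite normrM (gtr0_norm hN).
  by rewrite e2 (le_trans _ h3) // -e ler_wpM2l.
rewrite /MM ler_pdivlMr //; move: h4; rewrite mulrA ler_pM2r //.
Qed.

Lemma e1b N : 1 <= N -> `|l1 N - a1 * N| <= EE.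
Proof.
move=> hN.
have -> : l1 N - a1 * N = (vv N - dl * N - p) / 2.
  rewrite /l1 /dl /sg; by field.
rewrite normf_div (ger0_norm (ler0n _ 2)) /EE ler_pM2r ?invr_gt0 ?ltr0n //.
by rewrite (le_trans (ler_normB _ _)) // lerD2r vbound.
Qed.

Lemma e2b N : 1 <= N -> `|l2 N - a2 * N| <= EE.
Proof.
move=> hN.
have -> : l2 N - a2 * N = - (vv N - dl * N + p) / 2.
  rewrite /l2 /dl /sg; by field.
rewrite normf_div normrN (ger0_norm (ler0n _ 2)) /EE ler_pM2r ?invr_gt0 ?ltr0n //.
by rewrite (le_trans (ler_normD _ _)) // lerD2r vbound.
Qed.

Lemma MM_ge0 : 0 <= MM.
Proof. by rewrite /MM divr_ge0 // addr_ge0. Qed.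

Lemma EE_ge0 : 0 <= EE.
Proof. by rewrite /EE divr_ge0 ?ler0n // addr_ge0 // MM_ge0. Qed.

Lemma big_n (K : C) : 0 <= K -> exists N0 : nat, (0 < N0)%N /\ (forall n : nat, (N0 <= n)%N -> K < n%:R /\ 1 <= (n%:R : C)).
Proof.
move=> hK; exists (Num.Def.archi_bound K).+1; split => // n hn; split.
  by rewrite (lt_le_trans (archi_boundP hK)) // ler_nat ltnW.
by rewrite ler1n (leq_trans _ hn).
Qed.

Lemma conv_l (l : C -> C) (a : C) :
  (forall N, 1 <= N -> `|l N - a * N| <= EE) ->
  converges_to (fun n : nat => l n%:R / n%:R) a.
Proof.
move=> hl e he.
have [N0 [_ HN]] := big_n (divr_ge0 EE_ge0 (ltW he)).
exists N0 => n hn; have [hK h1] := HN n hn.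
have hN : 0 < (n%:R : C) by rewrite (lt_le_trans ltr01).
have -> : l n%:R / n%:R - a = (l n%:R - a * n%:R) / n%:R.
  by field; rewrite gt_eqF.
rewrite normf_div (gtr0_norm hN) ltr_pdivrMr //.
rewrite (le_lt_trans (hl _ h1)) //.
by move: hK; rewrite ltr_pdivrMr // mulrC.
Qed.

Lemma core_main :
  exists N0 : nat, (0 < N0)%N /\
  (forall n : nat, (N0 <= n)%N ->
     l1 n%:R != l2 n%:R /\
     (forall lam, FF a1 a2 p c q n%:R lam = 0 <-> lam = l1 n%:R \/ lam = l2 n%:R) /\
     (forall j : nat, (j < n)%N -> FF a1 a2 p c q j%:R (l1 n%:R) != 0 /\
                                  FF a1 a2 p c q j%:R (l2 n%:R) != 0)) /\
  converges_to (fun n : nat => l1 n%:R / n%:R) a1 /\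
  converges_to (fun n : nat => l2 n%:R / n%:R) a2.
Proof.
set eta := `|a1 / `|a1| - a2 / `|a2| |.
have heta : 0 < eta by rewrite normr_gt0 subr_eq0.
have hd : 0 < `|dl| by rewrite normr_gt0 dl_neq0.
have hz1 : 0 < `|a1| ^+ 2 * eta by rewrite mulr_gt0 // exprn_gt0 // normr_gt0.
have hz2 : 0 < `|a2| ^+ 2 * eta by rewrite mulr_gt0 // exprn_gt0 // normr_gt0.
set W := 2 * (`|a1 + a2| * EE + `|c|).
have hW : 0 <= W by rewrite mulr_ge0 ?ler0n // addr_ge0 // mulr_ge0 // EE_ge0.
set t1 := MM / `|dl|.
set t2 := W / (`|a1| ^+ 2 * eta).
set t3 := W / (`|a2| ^+ 2 * eta).
have ht1 : 0 <= t1 by rewrite divr_ge0 // ?MM_ge0 // ltW.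
have ht2 : 0 <= t2 by rewrite divr_ge0 // ltW.
have ht3 : 0 <= t3 by rewrite divr_ge0 // ltW.
have [N0 [hN0 HN]] := big_n (addr_ge0 (addr_ge0 ht1 ht2) ht3).
exists N0; split => //; split; last first.
  split; apply: conv_l; [exact: e1b | exact: e2b].
move=> n hn; have [hK h1] := HN n hn.
have hN : 0 < (n%:R : C) by rewrite (lt_le_trans ltr01).
have lt1 : t1 < n%:R.
  by rewrite (le_lt_trans _ hK) // -addrA lerDl addr_ge0.
have lt2 : t2 < n%:R.
  by rewrite (le_lt_trans _ hK) // -addrA addrCA lerDl addr_ge0.
have lt3 : t3 < n%:R.
  by rewrite (le_lt_trans _ hK) // lerDr addr_ge0.
split.
  apply/negP => /eqP h.
  have hv : vv n%:R = 0.
    have -> : vv n%:R = l1 n%:R - l2 n%:R by rewrite /l1 /l2; field.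
    by rewrite h subrr.
  have := vbound h1; rewrite hv sub0r normrN normrM (gtr0_norm hN).
  move: lt1; rewrite /t1 ltr_pdivrMr // mulrC => H1 H2.
  by have := lt_le_trans H1 H2; rewrite ltxx.
split.
  move=> lam; rewrite FF_fact; split.
    by move/eqP; rewrite mulf_eq0 !subr_eq0 => /orP [] /eqP ->; [left|right].
  by case => ->; rewrite subrr ?mul0r ?mulr0.
move=> j hj.
have hJ : 0 <= (j%:R : C) by rewrite ler0n.
have hNJ : (n%:R : C) != j%:R by rewrite eqr_nat neq_ltn hj orbT.
split.
  apply: (@avoid C a1 a2 p c q n%:R j%:R (l1 n%:R) EE) => //.
  - by rewrite FF_fact subrr mul0r.
  - exact: e1b.
  move: lt2; rewrite /t2 ltr_pdivrMr // => H; apply: (lt_le_trans H); rewrite le_eqVlt; apply/orP; left; apply/eqP; rewrite /eta; ring.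
rewrite FF_sym.
apply: (@avoid C a2 a1 p c q n%:R j%:R (l2 n%:R) EE) => //.
- by rewrite FF_sym FF_fact subrr mulr0.
- exact: e2b.
move: lt3; rewrite /t3 ltr_pdivrMr // => H; rewrite [a2 + a1]addrC [`|a2 / _ - _|]distrC; apply: (lt_le_trans H); rewrite le_eqVlt; apply/orP; left; apply/eqP; rewrite /eta; ring.
Qed.

End Core.

Unset Implicit Arguments.

Theorem lemma9 (C : archiClosedFieldType) (Q2 Q1 P1 : {poly C}) (Q0 p q : C)
  (alpha1 alpha2 : C) :
  size Q2 = 3%N -> (size Q1 <= 2)%N -> (size P1 <= 2)%N -> Q0 != 0 ->
  charpoly_T Q2 Q1 Q0 = Q0 *: (('X - alpha1%:P) * ('X - alpha2%:P)) ->
  ~~ same_arg alpha1 alpha2 ->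
  exists N : nat, (0 < N)%N /\
    exists lam1 lam2 : nat -> C,
      (forall n : nat, (N <= n)%N ->
         lam1 n != lam2 n /\
         forall lam : C,
           (exists y : {poly C}, size y = n.+1 /\ Top Q2 Q1 P1 Q0 p q lam y = 0)
           <-> (lam = lam1 n \/ lam = lam2 n)) /\
      converges_to (fun n => lam1 n / n%:R) alpha1 /\
      converges_to (fun n => lam2 n / n%:R) alpha2.
Proof.
move=> hs2 h1 h0 hQ0 hch hsa.
have h2 : (size Q2 <= 3)%N by rewrite hs2.
have hexp : ('X - alpha1%:P) * ('X - alpha2%:P) =
    'X^2 - (alpha1 + alpha2)%:P * 'X + (alpha1 * alpha2)%:P :> {poly C}.
  by rewrite polyCD polyCM; ring.
rewrite hexp /charpoly_T in hch.
have e0 : Q2`_2 = Q0 * (alpha1 * alpha2).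
  have := congr1 (fun P : {poly C} => P`_0) hch.
  rewrite /= !(coefD, coefZ, coefB, coefCM, coefC, coefX, coefXn, coefN, coefCM) /= => H.
  by transitivity (Q2`_2 + Q1`_1 * 0 + Q0 * 0); [ring | rewrite H; ring].
have e1 : Q1`_1 = - (Q0 * (alpha1 + alpha2)).
  have := congr1 (fun P : {poly C} => P`_1) hch.
  rewrite /= !(coefD, coefZ, coefB, coefCM, coefC, coefX, coefXn, coefMX, coefN, coefCM) /= => H.
  by transitivity (0 + Q1`_1 * 1 + Q0 * 0); [ring | rewrite H; ring].
have hq22 : Q2`_2 != 0.
  have : lead_coef Q2 != 0 by rewrite lead_coef_eq0 -size_poly_eq0 hs2.
  by rewrite lead_coefE hs2.
have ha1 : alpha1 != 0 by apply: contraNneq hq22; rewrite e0 => ->; rewrite mul0r mulr0.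
have ha2 : alpha2 != 0 by apply: contraNneq hq22; rewrite e0 => ->; rewrite !mulr0.
set c := P1`_1 / Q0 - alpha1 * alpha2.
have hdd : forall lam j, dd Q2 Q1 P1 Q0 p q lam j = Q0 * FF alpha1 alpha2 p c q j%:R lam.
  move=> lam j; rewrite /dd /FF /c e0 e1.
  case: j => [|j] /=; rewrite ?natrM; by field.
have [N0 [hN0 [HN [hc1 hc2]]]] := core_main p c q ha1 ha2 hsa.
exists N0; split => //.
exists (fun n => l1 alpha1 alpha2 p c q n%:R), (fun n => l2 alpha1 alpha2 p c q n%:R).
split; last by split.
move=> n hn; have [hne [hiff hav]] := HN n hn; split => // lam; split.
  move=> [y [hy hT]]; apply/hiff.
  have := Top_nec h2 h1 h0 hy hT; rewrite hdd => /eqP; rewrite mulf_eq0 (negPf hQ0) /=.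
  by move/eqP.
move=> hl; apply: (Top_exists h2 h1 h0).
  by rewrite hdd (proj2 (hiff lam) hl) mulr0.
move=> j hj; rewrite hdd mulf_neq0 //.
by case: hl => ->; have [] := hav j hj.
Qed.
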